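(* Let $(G_k)_{k\in\mathbb Z}$ be a gibonacci sequence and let $F_k$ denote the Fibonacci numbers. Let $m$, $r$, $n$, $t$ be integers with $r\ge 2$ and $n\ge 1$. Then \begin{equation*} \begin{split} &F_r \sum_{j = 1}^n (-1)^{r(n - j)} F_{m - r}^{n - j} F_m^{j - 1} G_{j + t + 1} G_{j + t + 2} \cdots G_{j + t + r - 1} G_{j + t + m}\\ &\qquad = F_m^n G_{n + t + 1} G_{n + t + 2} \cdots G_{n + t + r} - (-1)^{rn} F_{m - r}^n G_{t + 1} G_{t + 2} \cdots G_{t + r}. \end{split} \end{equation*}
   Context: A gibonacci sequence $(G_k)_{k\in\mathbb Z}$ is defined by arbitrary initial values $G_0=a$, $G_1=b$ (numbers, not both zero) and $G_k=G_{k-1}+G_{k-2}$ for all integers $k$. The Fibonacci numbers $F_k$ are the gibonacci sequence with $F_0=0$, $F_1=1$, extended to all integer indices by the same recurrence. The convention $0^0=1$ is used for powers. *)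

(* Defs.v *)
From mathcomp Require Import all_boot all_order all_algebra.
Set Implicit Arguments. Unset Strict Implicit. Unset Printing Implicit Defensive.
Import Order.TTheory GRing.Theory Num.Theory.
Local Open Scope ring_scope.

Definition gibonacci (R : nzRingType) (G : int -> R) : Prop :=
  forall k : int, G k = G (k - 1) + G (k - 2).

Fixpoint fibn (n : nat) : nat :=
  match n with
  | 0 => 0
  | S n' => match n' with 0 => 1 | S n'' => (fibn n' + fibn n'')%N end
  end.

(* Fibonacci numbers extended to all integers by the same recurrence:
   F_{-(n+1)} = (-1)^n F_{n+1}. *)
Definition Fib (R : nzRingType) (k : int) : R :=
  match k with
  | Posz n => (fibn n)%:R
  | Negz n => (-1) ^+ n * (fibn n.+1)%:R
  end.

Lemma Fib0 (R : nzRingType) : Fib R 0 = 0. Proof. by []. Qed.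
Lemma Fib1 (R : nzRingType) : Fib R 1 = 1. Proof. by []. Qed.

(* Main.v *)
Require Import Defs.
From mathcomp Require Import all_boot all_order all_algebra.
From mathcomp Require Import ring lra zify.
Import Order.TTheory GRing.Theory Num.Theory.
Local Open Scope ring_scope.

Section H.
Variable R : numFieldType.

Lemma Fib_step (k : int) : Fib R (k + 2) = Fib R (k + 1) + Fib R k.
Proof.
case: k => [n|n].
  rewrite -!PoszD !addnS !addn0 /=. by rewrite natrD addrC.
case: n => [|[|n]].
- rewrite /= expr0. ring.
- rewrite /= expr1 expr0. ring.
- have -> : Negz n.+2 + 2 = Negz n by rewrite !NegzE; lia.
  have -> : Negz n.+2 + 1 = Negz n.+1 by rewrite !NegzE; lia.
  rewrite /= !exprS natrD. ring.
Qed.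

Lemma Fib_gib : gibonacci (Fib R).
Proof. move=> k. have := Fib_step (k - 2). rewrite subrK.
have -> : k - 2 + 1 = k - 1 by lia. by rewrite addrC. Qed.

Lemma gib_zero (X : int -> R) : gibonacci X -> X 0 = 0 -> X 1 = 0 -> forall k, X k = 0.
Proof.
move=> hX h0 h1.
have pos : forall n : nat, X n = 0 /\ X n.+1 = 0.
  elim=> [|n [IH1 IH2]]; first by split.
  split=> //. rewrite hX. have -> : n.+2%:Z - 1 = n.+1 by lia.
  have -> : n.+2%:Z - 2 = n by lia. by rewrite IH1 IH2 addr0.
have neg : forall n : nat, X (- n%:Z) = 0 /\ X (1 - n%:Z) = 0.
  elim=> [|n [IH1 IH2]]; first by split.
  split; last by have -> : 1 - n.+1%:Z = - n%:Z by lia.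
  have := hX (1 - n%:Z). have -> : 1 - n%:Z - 1 = - n%:Z by lia.
  have -> : 1 - n%:Z - 2 = - n.+1%:Z by lia.
  rewrite IH1 IH2 add0r => <- //.
case=> n; first by case: (pos n).
rewrite NegzE. by case: (neg n.+1).
Qed.

Lemma Fib_neg (k : nat) : Fib R (- k%:Z) = (-1)^+(k.+1) * Fib R k.
Proof.
case: k => [|n]; first by rewrite /= mulr0.
rewrite -NegzE /= !exprS. ring.
Qed.

Lemma sign2 (r : nat) : (-1)^+r * (-1)^+r = 1 :> R.
Proof. by rewrite -exprMn mulrNN mulr1 expr1n. Qed.

Lemma gib_rep (X : int -> R) : gibonacci X -> forall k, X k = X 0 * Fib R (k-1) + X 1 * Fib R k.
Proof.
move=> hX k; apply/eqP; rewrite -subr_eq0; apply/eqP; move: k.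
apply: (@gib_zero (fun k => X k - (X 0 * Fib R (k-1) + X 1 * Fib R k))).
- move=> k /=. rewrite (hX k) (Fib_gib k) (Fib_gib (k-1)).
  have -> : k - 1 - 1 = k - 2 by lia. have -> : k - 1 - 2 = k - 2 - 1 by lia. ring.
- rewrite /= subnn expr0. ring.
- rewrite /=. ring.
Qed.

Lemma key0 (r : nat) (X : int -> R) : (1 <= r)%N -> gibonacci X -> forall m,
  Fib R m * X r%:Z - Fib R r%:Z * X m = (-1)^+r * Fib R (m - r%:Z) * X 0.
Proof.
move=> hr hX m; apply/eqP; rewrite -subr_eq0; apply/eqP; move: m.
apply: (@gib_zero (fun m => Fib R m * X r%:Z - Fib R r%:Z * X m - (-1)^+r * Fib R (m - r%:Z) * X 0)).
- move=> k /=. rewrite (hX k) (Fib_gib k) (Fib_gib (k - r%:Z)).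
  have -> : k - r%:Z - 1 = k - 1 - r%:Z by lia. have -> : k - r%:Z - 2 = k - 2 - r%:Z by lia. ring.
- rewrite sub0r Fib_neg exprS Fib0.
  transitivity (- (Fib R r * X 0) * (1 - (-1)^+r * (-1)^+r)); first ring.
  by rewrite sign2 subrr mulr0.
- case: r hr => // r _.
  have -> : 1 - r.+1%:Z = - r%:Z by lia.
  rewrite Fib_neg (@gib_rep X hX r.+1).
  have -> : r.+1%:Z - 1 = r by lia.
  rewrite Fib1. have h := sign2 r.+1.
  transitivity (X 0 * Fib R r * (1 - (-1)^+r.+1 * (-1)^+r.+1)); first ring.
  rewrite h. ring.
Qed.

Lemma key (r : nat) (X : int -> R) : (1 <= r)%N -> gibonacci X -> forall m s,
  Fib R r%:Z * X (s + m) = Fib R m * X (s + r%:Z) - (-1)^+r * Fib R (m - r%:Z) * X s.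
Proof.
move=> hr hX m s; apply/eqP; rewrite -subr_eq0; apply/eqP; move: s.
apply: (@gib_zero (fun s => Fib R r%:Z * X (s + m) - (Fib R m * X (s + r%:Z) - (-1)^+r * Fib R (m - r%:Z) * X s))).
- move=> k /=. rewrite (hX k) (hX (k + m)) (hX (k + r%:Z)).
  have -> : k + m - 1 = k - 1 + m by lia. have -> : k + m - 2 = k - 2 + m by lia.
  have -> : k + r%:Z - 1 = k - 1 + r%:Z by lia. have -> : k + r%:Z - 2 = k - 2 + r%:Z by lia. ring.
- rewrite /= !add0r. have := @key0 r X hr hX m. move=> h. 
  transitivity (-(Fib R m * X r%:Z - Fib R r%:Z * X m - (-1) ^+ r * Fib R (m - r%:Z) * X 0)); first ring.
  by rewrite h subrr oppr0.
- have hY : gibonacci (fun k => X (k + 1)).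
    move=> k /=. rewrite hX. have -> : k + 1 - 1 = k - 1 + 1 by lia.
    by have -> : k + 1 - 2 = k - 2 + 1 by lia.
  have := @key0 r _ hr hY m => /= h. rewrite add0r in h.
  rewrite /= ![1 + _]addrC.
  transitivity (-(Fib R m * X (r%:Z + 1) - Fib R r%:Z * X (m + 1) - (-1) ^+ r * Fib R (m - r%:Z) * X 1)); first ring.
  by rewrite h subrr oppr0.
Qed.

End H.

Theorem proposition6 (R : numFieldType) (G : int -> R) (m t : int) (r n : nat) :
  gibonacci G -> (G 0 != 0) || (G 1 != 0) ->
  (2 <= r)%N -> (1 <= n)%N ->
  Fib R r%:Z *
    \sum_(1 <= j < n.+1)
      ((-1) ^+ (r * (n - j))%N * Fib R (m - r%:Z) ^+ (n - j)%N
        * Fib R m ^+ (j - 1)%N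
        * (\prod_(1 <= i < r) G (j%:Z + t + i%:Z)) * G (j%:Z + t + m))
  = Fib R m ^+ n * (\prod_(1 <= i < r.+1) G (n%:Z + t + i%:Z))
    - (-1) ^+ (r * n)%N * Fib R (m - r%:Z) ^+ n
      * (\prod_(1 <= i < r.+1) G (t + i%:Z)).
Proof.
move=> hG _ hr _.
have hr1 : (1 <= r)%N by apply: leq_trans hr.
set a := (-1) ^+ r * Fib R (m - r%:Z).
set b := Fib R m.
pose P (k : nat) := \prod_(1 <= i < r.+1) G (k%:Z + t + i%:Z).
pose T (k : nat) := a ^+ (n - k) * b ^+ k * P k.
have -> : Fib R m ^+ n * (\prod_(1 <= i < r.+1) G (n%:Z + t + i%:Z))
    - (-1) ^+ (r * n)%N * Fib R (m - r%:Z) ^+ n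
      * (\prod_(1 <= i < r.+1) G (t + i%:Z)) = T n - T 0%N.
  rewrite /T /P subnn subn0 expr0 mul1r expr0 mulr1 /a exprMn -exprM.
  congr (_ - _ * _). apply: eq_bigr => i _. by rewrite add0r.
rewrite big_add1 /= mulr_sumr -telescope_sumr //.
apply: eq_big_nat => k /andP [_ hk].
rewrite /T /P subSS subn0.
set e := (n - k.+1)%N.
have -> : (n - k = e.+1)%N by rewrite /e subnSK.
rewrite (big_nat_recr r _ _ hr1) /=.
rewrite (big_nat_recl r _ _ hr1) /=.
have -> : \prod_(1 <= i < r) G (k%:Z + t + i.+1%:Z) = \prod_(1 <= i < r) G (k.+1%:Z + t + i%:Z).
  apply: eq_bigr => i _. congr G. lia.
have -> : k%:Z + t + 1 = k.+1%:Z + t - 1 + 1 by lia.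
set Q := \prod_(1 <= i < r) G (k.+1%:Z + t + i%:Z).
have hk' := @key R r G hr1 hG m (k.+1%:Z + t - 1 + 1).
rewrite subrK in hk'.
rewrite subrK.
change ((fibn r)%:R) with (Fib R r%:Z).
transitivity (a ^+ e * b ^+ k * Q * (Fib R r%:Z * G (k.+1%:Z + t + m))).
  rewrite /a exprMn -exprM. ring.
rewrite hk' /a /b. rewrite !exprS. ring.
Qed.
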